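(* For every Bochvar system $\mathbb{B}=\langle\mathbf{B},\mathbf{I}\rangle$, $\mathbb{B}$ is isomorphic to the Bochvar system $\mathbb{B}_{\mathbf{A}_{\mathbb{B}}}$.
   Context: A Bochvar system is a pair $\langle\mathbf{B},\mathbf{I}\rangle$ with $\mathbf{B}$ a Boolean algebra and $I\subseteq B$ containing $1$ and closed under $\wedge$. Bochvar systems $\langle\mathbf{B}_1,\mathbf{I}_1\rangle$ and $\langle\mathbf{B}_2,\mathbf{I}_2\rangle$ are isomorphic if there is a Boolean isomorphism $g:\mathbf{B}_1\to\mathbf{B}_2$ with $g(i)\in I_2$ for all $i\in I_1$. $\mathbf{WK}^e$ is the three-element algebra on $\{0,\tfrac12,1\}$ of type $\langle\wedge,\vee,\neg,J_2,0,1\rangle$. Its operations are: - $\neg$ swaps $0,1$ and fixes $\tfrac12$; - $\wedge,\vee$ are Boolean on $\{0,1\}$ and return $\tfrac12$ if some argument is $\tfrac12$; - $J_2(1)=1$ and $J_2(\tfrac12)=J_2(0)=0$. Bochvar algebras are the members of $ISP(\mathbf{WK}^e)$. Their $\{\wedge,\vee,\neg,0,1\}$-reducts are canonically Płonka sums of Boolean algebras $\mathbf{A}_i$ over a join-semilattice $\langle I,\vee,i_0\rangle$. For a Bochvar system $\mathbb{B}$, $\mathbf{A}_{\mathbb{B}}$ is the unique Bochvar algebra whose $\{\wedge,\vee,\neg,0,1\}$-reduct is the Płonka sum of the following system: - index semilattice $I$ ordered dually to $\mathbf{B}$; - fibres $\mathbf{B}/[i)$, the quotient by the congruence of the principal filter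 $[i)$; - maps $p_{ij}(a/[i))=a/[j)$. For a Bochvar algebra $\mathbf{A}$, $\mathbb{B}_{\mathbf{A}}=\langle\mathbf{A}_{i_0},K\rangle$ with $K=\{J_2(1^{A_i}):i\in I\}$, where $1^{A_i}$ is the top of fibre $\mathbf{A}_i$. *)

(* Defs.v *)
From HB Require Import structures.
From mathcomp Require Import all_boot all_order.
Set Implicit Arguments. Unset Strict Implicit. Unset Printing Implicit Defensive.
Import Order.Theory.
Local Open Scope order_scope.

Record bochvar_system d (B : ctbDistrLatticeType d) := BochvarSystem {
  bs_I : {pred B};
  bs_top : \top \in bs_I;
  bs_meet : forall i j, i \in bs_I -> j \in bs_I -> i `&` j \in bs_I
}.

Inductive wk3 := W0 | Wh | W1.

Definition wneg (x : wk3) := match x with W0 => W1 | Wh => Wh | W1 => W0 end.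
Definition wmeet (x y : wk3) :=
  match x, y with
  | Wh, _ | _, Wh => Wh
  | W1, W1 => W1
  | _, _ => W0
  end.
Definition wjoin (x y : wk3) :=
  match x, y with
  | Wh, _ | _, Wh => Wh
  | W0, W0 => W0
  | _, _ => W1
  end.
Definition wJ2 (x : wk3) := match x with W1 => W1 | _ => W0 end.

(** Membership in ISP(WK^e): the algebra <A, m, j, n, J, z, o> of type
    <meet, join, neg, J2, 0, 1> embeds (injective homomorphism) into a
    power WK^e^X. *)
Definition is_bochvar (A : Type) (m jn : A -> A -> A) (n J : A -> A) (z o : A)
  : Prop :=
  exists (X : Type) (h : A -> X -> wk3),
    injective h /\
    (forall x y, h (m x y) = fun t => wmeet (h x t) (h y t)) /\
    (forall x y, h (jn x y) = fun t => wjoin (h x t) (h y t)) /\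
    (forall x, h (n x) = fun t => wneg (h x t)) /\
    (forall x, h (J x) = fun t => wJ2 (h x t)) /\
    h z = (fun _ => W0) /\
    h o = (fun _ => W1).

Section PlonkaSum.
Context {d : Order.disp_t} {B : ctbDistrLatticeType d} (S : bochvar_system B).

(** Carrier of the Płonka sum of the system of S: pairs (i, a) with i in I and
    a a representative of a class of B/[i).  We represent the class a/[i)
    (a = b mod [i) iff a /\ i = b /\ i) by its canonical representative a /\ i,
    i.e. an element below i. *)
Definition ps_carrier := {p : B * B | (p.1 \in bs_I S) && (p.2 <= p.1)}.

Definition ps_idx (x : ps_carrier) : B := (val x).1.
Definition ps_el (x : ps_carrier) : B := (val x).2.

Lemma ps_idx_in (x : ps_carrier) : ps_idx x \in bs_I S.
Proof. by rewrite /ps_idx; case: x => -[i a] /= /andP[]. Qed.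

Lemma mk_ps_proof (k a : B) (Hk : k \in bs_I S) :
  ((k, a `&` k).1 \in bs_I S) && ((k, a `&` k).2 <= (k, a `&` k).1).
Proof. by rewrite /= Hk leIr. Qed.

Definition mk_ps (k a : B) (Hk : k \in bs_I S) : ps_carrier :=
  exist _ (k, a `&` k) (mk_ps_proof a Hk).

Definition ps_join_idx (x y : ps_carrier) : B := ps_idx x `&` ps_idx y.
(* the join in the index semilattice I (ordered dually to B) is the meet of B *)

Lemma ps_join_idx_in x y : ps_join_idx x y \in bs_I S.
Proof. exact: bs_meet (ps_idx_in x) (ps_idx_in y). Qed.

(** Płonka-sum operations: p_{i,k}(x) op p_{j,k}(y) computed in B/[k),
    where k = i v_I j and p_{ik}(a/[i)) = a/[k). *)
Definition ps_meet (x y : ps_carrier) : ps_carrier :=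
  mk_ps (ps_el x `&` ps_el y) (ps_join_idx_in x y).
Definition ps_join (x y : ps_carrier) : ps_carrier :=
  mk_ps (ps_el x `|` ps_el y) (ps_join_idx_in x y).
Definition ps_neg (x : ps_carrier) : ps_carrier :=
  mk_ps (~` ps_el x) (ps_idx_in x).
(* constants live in the fibre of the least index i0 = \top of B *)
Definition ps0 : ps_carrier := mk_ps \bot (bs_top S).
Definition ps1 : ps_carrier := mk_ps \top (bs_top S).

Definition fib_top (i : B) (Hi : i \in bs_I S) : ps_carrier := mk_ps \top Hi.

Definition A_of_is_bochvar (J : ps_carrier -> ps_carrier) : Prop :=
  is_bochvar ps_meet ps_join ps_neg J ps0 ps1.

(** <B, I> is isomorphic to B_{A} = <A_{i0}, K>, K = { J(1^{A_i}) : i in I },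
    where A_{i0} is the fibre over i0 = \top (with the operations of A restricted
    to it): there is a Boolean isomorphism g : B -> A_{i0} with g(I) ⊆ K. *)
Definition iso_to_B_A (J : ps_carrier -> ps_carrier) : Prop :=
  exists g : B -> ps_carrier,
    (forall a, ps_idx (g a) = \top) /\
    injective g /\
    (forall y, ps_idx y = \top -> exists a, g a = y) /\
    (forall a b, g (a `&` b) = ps_meet (g a) (g b)) /\
    (forall a b, g (a `|` b) = ps_join (g a) (g b)) /\
    (forall a, g (~` a) = ps_neg (g a)) /\
    g \bot = ps0 /\ g \top = ps1 /\
    (forall i, i \in bs_I S ->
       exists j (Hj : j \in bs_I S), J (fib_top Hj) = g i).

End PlonkaSum.

(* Main.v *)
Require Import Defs.
From mathcomp Require Import all_boot all_order.
From Stdlib Require Import Classical.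
From mathcomp Require Import boolp classical_sets.
Import Order.Theory.
Local Open Scope order_scope.

Section UF.
Context {d : Order.disp_t} {B : ctbDistrLatticeType d}.

Definition isUF (U : B -> Prop) :=
  [/\ forall x y, U x -> U y -> U (x `&` y),
      forall x y, U x -> (x <= y) -> U y,
      ~ U \bot & forall x, U x \/ U (~` x)].

Definition Pc (c : B) (A : set B) : Prop :=
  [/\ forall x y, A x -> A y -> A (x `&` y),
      forall x y, A x -> (x <= y) -> A y,
      ~ A \bot & forall x, A x -> A (x `&` c)].

Lemma uf_exists (c : B) : c != \bot -> exists U, isUF U /\ U c.
Proof.
move=> c0.
have [A [[Am Au A0 Ac] Amax]] : exists A, Pc c A /\ forall B, (A `<` B)%classic -> ~ Pc c B.
  apply: Zorn_bigcup => F FP Ftot.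
  split.
  - move=> x y [X FX Xx] [Y FY Yy].
    have [XY|YX] := Ftot _ _ FX FY.
    + exists Y => //; have [m _ _ _] := FP _ FY; exact: m (XY _ Xx) Yy.
    + exists X => //; have [m _ _ _] := FP _ FX; exact: m Xx (YX _ Yy).
  - move=> x y [X FX Xx] xy; exists X => //; have [_ u _ _] := FP _ FX; exact: u Xx xy.
  - by move=> [X FX X0]; have [_ _ n _] := FP _ FX; exact: n X0.
  - by move=> x [X FX Xx]; exists X => //; have [_ _ _ e] := FP _ FX; exact: e.
have Ac' : A c.
  apply: NNPP => nAc.
  apply: (Amax (fun y => c <= y)).
    split; first by move=> x Ax; exfalso; apply: nAc; apply: Au (Ac _ Ax) _; exact: leIr.
    by move=> /(_ c (lexx c)).
  split.
  - by move=> x y cx cy; rewrite lexI cx cy.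
  - by move=> x y cx xy; exact: le_trans xy.
  - by move=> c0'; move: c0; rewrite eq_le c0' le0x.
  - by move=> x cx; rewrite lexI cx lexx.
exists A; split => //; split => // x.
apply: NNPP => /not_orP [nAx nAcx].
pose A' := fun y => exists2 a, A a & a `&` x <= y.
have AA' : (A `<` A')%classic.
  split; first by move=> a Aa; exists a => //; exact: leIl.
  by move=> /(_ x) H; apply: nAx; apply: H; exists c => //; exact: leIr.
apply: (Amax A' AA'); split.
- move=> y z [a Aa ay] [b Ab bz]; exists (a `&` b); first exact: Am.
  rewrite lexI; apply/andP; split.
    apply: le_trans ay; rewrite lexI leIr andbT; apply: le_trans (leIl _ _) _; exact: leIl.
  apply: le_trans bz; rewrite lexI leIr andbT; apply: le_trans (leIl _ _) _; exact: leIr.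
- by move=> y z [a Aa ay] yz; exists a => //; exact: le_trans yz.
- move=> [a Aa ax0]; apply: nAcx; apply: Au Aa _.
  by rewrite -disj_leC eq_le ax0 le0x.
- move=> y [a Aa ay]; exists (a `&` c); first exact: Ac.
  rewrite lexI; apply/andP; split.
    apply: le_trans ay; rewrite lexI leIr andbT; apply: le_trans (leIl _ _) _; exact: leIl.
  by apply: le_trans (leIl _ _) _; exact: leIr.
Qed.
End UF.
Section UFP.
Context {d : Order.disp_t} {B : ctbDistrLatticeType d} (U : B -> Prop) (HU : isUF U).
Definition ub (a : B) : bool := `[< U a >].
Lemma uS x y : x <= y -> ub x -> ub y.
Proof. by case: HU => _ hu _ _ xy /asboolP Ux; apply/asboolP; exact: hu Ux xy. Qed.
Lemma uI x y : ub (x `&` y) = ub x && ub y.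
Proof.
case: HU => hm _ _ _; apply/idP/andP.
  by move=> H; split; apply: uS H; [exact: leIl|exact: leIr].
by case=> /asboolP Ux /asboolP Uy; apply/asboolP; exact: hm.
Qed.
Lemma u0 : ub \bot = false.
Proof. by case: HU => _ _ h0 _; apply/asboolP. Qed.
Lemma uC x : ub (~` x) = ~~ ub x.
Proof.
case: HU => _ _ _ ht; apply/idP/idP.
  by move=> H; apply/negP => H'; have := uI x (~` x); rewrite meetxC u0 H H'.
by move=> /negP nx; case: (ht x) => H; [exfalso; apply: nx; exact/asboolP|exact/asboolP].
Qed.
Lemma u1 : ub \top = true.
Proof. by rewrite -compl0 uC u0. Qed.
Lemma uU x y : ub (x `|` y) = ub x || ub y.
Proof. by rewrite -[x `|` y]complK complU uC uI !uC negb_and !negbK. Qed.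
End UFP.

Section Main.
Context {d : Order.disp_t} {B : ctbDistrLatticeType d} (S : bochvar_system B).

Lemma ndisj (a b : B) : ~~ (a <= b) -> a `&` ~` b != \bot.
Proof. by rewrite disj_leC complK. Qed.

Definition UFT := {U : B -> Prop | isUF U}.
Definition hh (x : ps_carrier S) (U : UFT) : wk3 :=
  if ub (sval U) (ps_idx x) then if ub (sval U) (ps_el x) then W1 else W0 else Wh.

Definition Jst (x : ps_carrier S) : ps_carrier S := mk_ps (ps_el x) (bs_top S).

Lemma el_le (x : ps_carrier S) : ps_el x <= ps_idx x.
Proof. by rewrite /ps_idx /ps_el; case: x => -[i a] /= /andP[]. Qed.

Lemma ps_eq (x y : ps_carrier S) : ps_idx x = ps_idx y -> ps_el x = ps_el y -> x = y.
Proof.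
move=> e1 e2; apply: val_inj; move: e1 e2; rewrite /ps_idx /ps_el.
by case: (val x) => ??; case: (val y) => ?? /= -> ->.
Qed.

Lemma part1 : A_of_is_bochvar Jst.
Proof.
exists UFT, hh; split; [|split;[|split;[|split;[|split;[|split]]]]].
- move=> x y E.
  have Hi : ps_idx x = ps_idx y.
    apply/eqP; rewrite eq_le; apply/andP; split; apply: contraT => /ndisj H.
    + have [U [HU Ux]] := uf_exists _ H.
      have := congr1 (fun f => f (exist _ U HU)) E; rewrite /hh /=.
      have /asboolP := Ux; rewrite -/(ub U _) (uI _ HU) (uC _ HU) => /andP[-> /negbTE ->].
      by case: ifP.
    + have [U [HU Ux]] := uf_exists _ H.
      have := congr1 (fun f => f (exist _ U HU)) E; rewrite /hh /=.
      have /asboolP := Ux; rewrite -/(ub U _) (uI _ HU) (uC _ HU) => /andP[-> /negbTE ->].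
      by case: ifP.
  apply: ps_eq => //.
  apply/eqP; rewrite eq_le; apply/andP; split; apply: contraT => /ndisj H.
  + have [U [HU Ux]] := uf_exists _ H.
    have := congr1 (fun f => f (exist _ U HU)) E; rewrite /hh /= -Hi.
    have /asboolP := Ux; rewrite -/(ub U _) (uI _ HU) (uC _ HU) => /andP[ua /negbTE ->].
    by rewrite ua (uS _ HU _ _ (el_le x) ua).
  + have [U [HU Ux]] := uf_exists _ H.
    have := congr1 (fun f => f (exist _ U HU)) E; rewrite /hh /= Hi.
    have /asboolP := Ux; rewrite -/(ub U _) (uI _ HU) (uC _ HU) => /andP[ua /negbTE ->].
    by rewrite ua (uS _ HU _ _ (el_le y) ua).
- move=> x y; apply: funext => -[U HU]; rewrite /hh /=.
  rewrite /ps_meet /mk_ps /ps_idx /ps_el /ps_join_idx /ps_idx /= !(uI _ HU).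
  by case: (ub U (val x).1); case: (ub U (val y).1); case: (ub U (val x).2); case: (ub U (val y).2).
- move=> x y; apply: funext => -[U HU]; rewrite /hh /=.
  rewrite /ps_join /mk_ps /ps_idx /ps_el /ps_join_idx /ps_idx /= !(uI _ HU) (uU _ HU).
  by case: (ub U (val x).1); case: (ub U (val y).1); case: (ub U (val x).2); case: (ub U (val y).2).
- move=> x; apply: funext => -[U HU]; rewrite /hh /=.
  rewrite /ps_neg /mk_ps /ps_idx /ps_el /= !(uI _ HU) (uC _ HU).
  by case: (ub U (val x).1); case: (ub U (val x).2).
- move=> x; apply: funext => -[U HU]; rewrite /hh /=.
  rewrite /Jst /mk_ps /ps_idx /ps_el /= !(uI _ HU) (u1 _ HU).
  have := uS _ HU _ _ (el_le x); rewrite /ps_el /ps_idx.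
  by case: (ub U (val x).1); case: (ub U (val x).2) => // /(_ isT).
- apply: funext => -[U HU]; rewrite /hh /= /ps0 /mk_ps /ps_idx /ps_el /=.
  by rewrite (uI _ HU) (u1 _ HU) (u0 _ HU).
- apply: funext => -[U HU]; rewrite /hh /= /ps1 /mk_ps /ps_idx /ps_el /=.
  by rewrite (uI _ HU) (u1 _ HU).
Qed.
End Main.
Ltac unf := unfold ps_meet, ps_join, ps_neg, ps_join_idx, ps0, ps1, fib_top, mk_ps, ps_el, ps_idx; simpl.

Section P2.
Context {d : Order.disp_t} {B : ctbDistrLatticeType d} (S : bochvar_system B).

Lemma part2 (J : ps_carrier S -> ps_carrier S) : A_of_is_bochvar J -> iso_to_B_A J.
Proof.
move=> [X [h [hinj [hm [hj [hn [hJ [h0 h1]]]]]]]].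
pose g (a : B) : ps_carrier S := mk_ps a (bs_top S).
have pt : forall (u v : ps_carrier S) t, u = v -> h u t = h v t by move=> u v t ->.
exists g; split; [|split;[|split;[|split;[|split;[|split;[|split;[|split]]]]]]].
- by [].
- by move=> a b /(congr1 (@ps_el _ _ S)); rewrite /ps_el /= !meetx1.
- move=> y Hy; exists (ps_el y); apply: ps_eq; first by rewrite Hy.
  by rewrite /ps_el /= meetx1.
- by move=> a b; apply: ps_eq; rewrite /g; unf; rewrite ?meetx1.
- by move=> a b; apply: ps_eq; rewrite /g; unf; rewrite ?meetx1.
- by move=> a; apply: ps_eq; rewrite /g; unf; rewrite ?meetx1.
- by [].
- by [].
move=> i Hi; exists i, Hi.
set x := fib_top Hi; set y := J x; set z := g (~` i).
have F1 : ps_join x (ps_neg x) = x.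
  by apply: ps_eq; rewrite /x /z /g; unf; rewrite ?meet1x ?meetCx ?joinx0 ?meetxx.
have hx0 t : h x t <> W0.
  move=> E; have := pt _ _ t F1; rewrite hj hn /= E //.
have F2 : ps_join y (ps_neg y) = ps1 S.
  apply: hinj; apply: funext => t; rewrite hj hn hJ h1 /=.
  by case: (h x t).
have ky : ps_idx y = \top.
  by have := congr1 (@ps_idx _ _ S) F2; unf; rewrite meetxx.
have ky' : (sval y).1 = \top := ky.
have F3 : ps_meet x y = x.
  apply: hinj; apply: funext => t; rewrite hm hJ /=.
  by have := hx0 t; case: (h x t).
have ic : i <= ps_el y.
  have := congr1 (@ps_el _ _ S) F3; rewrite /x; unf; rewrite ky' ?meet1x ?meetx1.
  move=> E; change ((sval y).2) with (ps_el y) in E. rewrite -E; apply: le_trans (leIl _ _) _; exact: leIr.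
have F4 : ps_meet x z = ps_neg x.
  by apply: ps_eq; rewrite /x /z /g; unf; rewrite ?meet1x ?meetx1 ?meetxC ?meetCx ?meet0x.
have F5 : ps_join z (ps_neg z) = ps1 S.
  by apply: ps_eq; rewrite /x /z /g; unf; rewrite ?meet1x ?meetx1 ?joinxC.
have F6 : ps_meet y z = ps0 S.
  apply: hinj; apply: funext => t; rewrite hm hJ h0 /=.
  have := pt _ _ t F4; have := pt _ _ t F5; rewrite hm hn hj h1 /=.
  by have := hx0 t; case: (h x t); case: (h z t).
have ci : ps_el y <= i.
  have := congr1 (@ps_el _ _ S) F6; rewrite /z /g; unf; rewrite ky' ?meetx1.
  by move=> /eqP; rewrite disj_leC complK.
apply: ps_eq; first by rewrite ky.
by rewrite /ps_el /= meetx1; apply/eqP; rewrite eq_le ci ic.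
Qed.
End P2.

Theorem theorem3p6 (d : Order.disp_t) (B : ctbDistrLatticeType d)
    (S : bochvar_system B) :
  (exists J : ps_carrier S -> ps_carrier S, A_of_is_bochvar J) /\
  (forall J : ps_carrier S -> ps_carrier S,
      A_of_is_bochvar J -> iso_to_B_A J).
Proof.
split; first by exists (Jst S); exact: part1.
exact: part2.
Qed.
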